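(* Fix a $d$-RSK growth diagram on a Young diagram $F$ and a lattice point $p$ of $F$ such that $\mathrm{Rect}_p$ contains no se-chain of length $d$. Then every cell of $\mathrm{Rect}_p$ satisfies the RSK local rule.
   Context: Partitions: finite weakly decreasing sequences of positive integers, $\lambda_i=0$ for $i>\ell(\lambda)$; $d$-partitions have $\ell\le d$; $\alpha\prec\beta$ (also $\beta\succ\alpha$) means $\beta_1\ge\alpha_1\ge\beta_2\ge\alpha_2\ge\cdots$. Young diagrams lie in the first quadrant with unit cells at integer lattice points, left-justified, rows stacked upward; lattice points are cell corners; a filling assigns nonnegative integers to cells. For a lattice point $p=(x,y)$, $\mathrm{Rect}_p$ is the rectangle $[0,x]\times[0,y]$ viewed as a Young diagram. A se-chain is a sequence of cells with nonzero entries, each strictly below and strictly to the right of the previous; its length is the number of cells. For a cell with entry $m$ and bottom-left, top-left, bottom-right, top-right corners $\kappa,\mu,\nu,\rho$: the RSK local rule requires $\mu\succ\kappa\prec\nu$, $\mu\prec\rho\succ\nu$, $\rho_1=m+\max(\mu_1,\nu_1)$, and $\rho_i+\kappa_{i-1}=\min(\mu_{i-1},\nu_{i-1})+\max(\mu_i,\nu_i)$ for all $i\ge2$. The $d$-RSK local rule requires all four to be $d$-partitions, $\mu\succ\kappa\prec\nu$, $\mu\prec\rho\succ\nu$, $m=0$ or $\kappa_d=0$, $\rho_1+\kappa_d=m+\min(\mu_d,\nu_d)+\max(\mu_1,\nu_1)$, and $\rho_i+\kappa_{i-1}=\min(\mu_{i-1},\nu_{i-1})+\max(\mu_i,\nu_i)$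 for $2\le i\le d$. A $d$-RSK growth diagram on $F$ is a filling plus a partition at each lattice point, with $\emptyset$ at all lattice points on the coordinate axes, every cell satisfying the $d$-RSK local rule. *)

(* Defs.v *)
From mathcomp Require Import all_boot.
Set Implicit Arguments. Unset Strict Implicit. Unset Printing Implicit Defensive.

Definition is_partition (l : seq nat) : bool :=
  sorted geq l && all (fun k => 0 < k) l.

(* 1-indexed parts: part l i = lambda_i (i >= 1); lambda_i = 0 for i > size l. *)
Definition part (l : seq nat) (i : nat) : nat := nth 0 l i.-1.

Definition is_dpartition (d : nat) (l : seq nat) : bool :=
  is_partition l && (size l <= d).

Definition interlace (alpha beta : seq nat) : Prop :=
  forall i, 1 <= i -> part alpha i <= part beta i /\ part beta i.+1 <= part alpha i.

(* RSK local rule for a cell with entry m and corners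
   kappa (bottom-left), mu (top-left), nu (bottom-right), rho (top-right). *)
Definition RSK_local (m : nat) (kappa mu nu rho : seq nat) : Prop :=
  [/\ interlace kappa mu /\ interlace kappa nu,
      interlace mu rho /\ interlace nu rho,
      part rho 1 = m + maxn (part mu 1) (part nu 1)
    & forall i, 2 <= i ->
        part rho i + part kappa i.-1 =
        minn (part mu i.-1) (part nu i.-1) + maxn (part mu i) (part nu i)].

Definition dRSK_local (d : nat) (m : nat) (kappa mu nu rho : seq nat) : Prop :=
  [/\ [&& is_dpartition d kappa, is_dpartition d mu, is_dpartition d nu
        & is_dpartition d rho],
      (interlace kappa mu /\ interlace kappa nu) /\
      (interlace mu rho /\ interlace nu rho),
      m = 0 \/ part kappa d = 0,
      part rho 1 + part kappa d =
        m + minn (part mu d) (part nu d) + maxn (part mu 1) (part nu 1)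
    & forall i, 2 <= i -> i <= d ->
        part rho i + part kappa i.-1 =
        minn (part mu i.-1) (part nu i.-1) + maxn (part mu i) (part nu i)].

(* A Young diagram is given by its row lengths F (a partition), rows stacked
   upward from row 0.  Cell (a,b) has bottom-left corner (a,b). *)
Definition in_diagram (F : seq nat) (c : nat * nat) : bool :=
  (c.2 < size F) && (c.1 < nth 0 F c.2).

(* Lattice points of F: corners of cells of F (and the origin). *)
Definition lattice_point (F : seq nat) (p : nat * nat) : bool :=
  (p.2 <= size F) && (p.1 <= nth 0 F p.2.-1).

Definition in_rect (p : nat * nat) (c : nat * nat) : bool :=
  (c.1 < p.1) && (c.2 < p.2).

(* d-RSK growth diagram on F: filling f (entry of cell (a,b) is f a b) and
   partition g x y at each lattice point (x,y). *)
Definition dRSK_growth (d : nat) (F : seq nat)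
    (f : nat -> nat -> nat) (g : nat -> nat -> seq nat) : Prop :=
  (forall x y, lattice_point F (x, y) -> (x == 0) || (y == 0) -> g x y = [::]) /\
  (forall a b, in_diagram F (a, b) ->
     dRSK_local d (f a b) (g a b) (g a b.+1) (g a.+1 b) (g a.+1 b.+1)).

Definition se_step (c c' : nat * nat) : bool := (c.1 < c'.1) && (c'.2 < c.2).

Definition se_chain_in_rect (f : nat -> nat -> nat) (p : nat * nat)
    (s : seq (nat * nat)) : Prop :=
  all (fun c => in_rect p c && (f c.1 c.2 != 0)) s /\ sorted se_step s.

(* Main.v *)
Require Import Defs.
From mathcomp Require Import all_boot.
From mathcomp Require Import zify.

Set Implicit Arguments. Unset Strict Implicit. Unset Printing Implicit Defensive.

Definition loc (m : nat) (K M N R : nat -> nat) : Prop :=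
  [/\ forall i, 0 < i -> K i <= M i /\ K i <= N i,
      R 1 = m + maxn (M 1) (N 1)
    & forall i, 1 < i -> R i + K i.-1 = minn (M i.-1) (N i.-1) + maxn (M i) (N i)].

Definition growth (U V : nat) (f : nat -> nat -> nat)
  (L : nat -> nat -> nat -> nat) : Prop :=
  [/\ forall a b, a < U -> b < V ->
        loc (f a b) (L a b) (L a b.+1) (L a.+1 b) (L a.+1 b.+1),
      forall y i, y <= V -> L 0 y i = 0
    & forall x i, x <= U -> L x 0 i = 0].

Lemma shift_loc m K M N R : loc m K M N R ->
  loc (minn (M 1) (N 1) - K 1) (fun i => K i.+1) (fun i => M i.+1)
      (fun i => N i.+1) (fun i => R i.+1).
Proof.
case=> H1 H2 H3; split.
- by move=> i _; apply: H1.
- have := H3 2 isT; have := H1 1 isT; simpl; lia.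
- move=> i Hi; have Hi1 : 1 < i.+1 by lia.
  have := H3 i.+1 Hi1.
  have E : i.-1.+1 = i by lia.
  by rewrite /= E.
Qed.

Definition ofill (L : nat -> nat -> nat -> nat) (a b : nat) : nat :=
  minn (L a b.+1 1) (L a.+1 b 1) - L a b 1.

Lemma shift_growth U V f L : growth U V f L ->
  growth U V (ofill L) (fun x y i => L x y i.+1).
Proof.
case=> H1 H2 H3; split.
- by move=> a b ha hb; apply: (shift_loc (H1 a b ha hb)).
- by move=> y i hy; apply: H2.
- by move=> x i hx; apply: H3.
Qed.

Lemma base_nz U V f L : growth U V f L -> forall u v, u <= U -> v <= V ->
  0 < L u v 1 -> exists a b, [/\ a < u, b < v & f a b != 0].
Proof.
case=> H1 H2 H3.
elim=> [|u IHu] v hu hv; first by rewrite H2.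
elim: v hv => [|v IHv] hv; first by rewrite H3.
have [_ E _] := H1 u v hu hv.
rewrite E.
case: (boolP (f u v == 0)) => [/eqP -> | nz] hpos; last by exists u, v.
have [h1|h2] : 0 < L u v.+1 1 \/ 0 < L u.+1 v 1 by lia.
- have [a [b [ha hb hf]]] := IHu v.+1 (ltnW hu) hv h1.
  by exists a, b; split => //; lia.
- have [a [b [ha hb hf]]] := IHv (ltnW hv) h2.
  by exists a, b; split => //; lia.
Qed.

Lemma G_h U V f L : growth U V f L -> forall x y, x < U -> y <= V ->
  L x y 1 <= L x.+1 y 1.
Proof.
case=> H1 H2 H3 x y hx hy.
case: (ltnP y V) => hyV.
- by have [/(_ 1 isT) [_ ->] _ _] := H1 x y hx hyV.
- have eyV : y = V by lia.
  subst y; case: V H1 H2 H3 hy hyV => [|V] H1 H2 H3 hy hyV.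
  + by rewrite !H3 // ltnW.
  + have [_ E _] := H1 x V hx (ltnSn _). rewrite E. lia.
Qed.

Lemma G_v U V f L : growth U V f L -> forall x y, x <= U -> y < V ->
  L x y 1 <= L x y.+1 1.
Proof.
case=> H1 H2 H3 x y hx hy.
case: (ltnP x U) => hxU.
- by have [/(_ 1 isT) [-> _] _ _] := H1 x y hxU hy.
- have exU : x = U by lia.
  subst x; case: U H1 H2 H3 hx hxU => [|U] H1 H2 H3 hx hxU.
  + by rewrite !H2 // ltnW.
  + have [_ E _] := H1 U y (ltnSn _) hy. rewrite E. lia.
Qed.

Lemma G_mono U V f L : growth U V f L -> forall x y x' y',
  x <= x' -> x' <= U -> y <= y' -> y' <= V -> L x y 1 <= L x' y' 1.
Proof.
move=> HG x y x' y' hx hx' hy hy'.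
have Hh : forall yy, yy <= V -> forall a, a <= x' - x -> L x yy 1 <= L (x + a) yy 1.
  move=> yy hyy; elim=> [|a IH] ha; first by rewrite addn0.
  apply: (leq_trans (IH (ltnW ha))); rewrite addnS; apply: (G_h HG) => //; lia.
have Hv : forall a, a <= y' - y -> L x' y 1 <= L x' (y + a) 1.
  elim=> [|a IH] ha; first by rewrite addn0.
  apply: (leq_trans (IH (ltnW ha))); rewrite addnS; apply: (G_v HG) => //; lia.
have := Hh y (leq_trans hy hy') (x' - x) (leqnn _).
have := Hv (y' - y) (leqnn _).
rewrite !subnKC //. lia.
Qed.

Lemma wit_p U V f L : growth U V f L -> forall b, b < V ->
  forall a, a <= U -> forall T, T < L a b.+1 1 -> L a b 1 <= T ->
  exists c, [/\ c < a, f c b != 0 & T < L c.+1 b.+1 1].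
Proof.
case=> H1 H2 H3 b hb; elim=> [|a IH] ha T hT1 hT2; first by rewrite H2 in hT1.
have [/(_ 1 isT) [_ KN] E _] := H1 a b ha hb.
case: (boolP (f a b == 0)) => [/eqP f0 | nz]; last by exists a.
rewrite E f0 in hT1.
have [c [hc hf hT]] := IH (ltnW ha) T ltac:(lia) ltac:(lia).
by exists c; split => //; lia.
Qed.

Lemma wit_q U V f L : growth U V f L -> forall a, a < U ->
  forall b, b <= V -> forall T, T < L a.+1 b 1 -> L a b 1 <= T ->
  exists r, [/\ r < b, f a r != 0 & T < L a.+1 r.+1 1].
Proof.
case=> H1 H2 H3 a ha; elim=> [|b IH] hb T hT1 hT2; first by rewrite H3 in hT1.
have [/(_ 1 isT) [KM _] E _] := H1 a b ha hb.
case: (boolP (f a b == 0)) => [/eqP f0 | nz]; last by exists b.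
rewrite E f0 in hT1.
have [r [hr hf hT]] := IH (ltnW hb) T ltac:(lia) ltac:(lia).
by exists r; split => //; lia.
Qed.

Lemma claim U V f L : growth U V f L -> forall u v, u <= U -> v <= V ->
  forall s : seq (nat * nat), se_chain_in_rect (ofill L) (u, v) s ->
  forall s1 s', s = s1 :: s' ->
  forall p : nat * nat, in_rect (u, v) p -> f p.1 p.2 != 0 ->
  p.1 < s1.1 -> s1.2 <= p.2 -> L s1.1 s1.2 1 < L p.1.+1 p.2.+1 1 ->
  exists t, se_chain_in_rect f (u, v) (p :: t) /\ size t = size s.
Proof.
move=> HG u v hu hv s [Hall Hsort] s1 s' Es; subst s.
elim: s' s1 Hall Hsort => [|s2 s'' IH] [x1 y1] Hall Hsort [px py] Hp Hfp /= hpx hpy hG.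
- move: Hall => /= /andP [/andP [/andP [/= hx1 hy1] ho] _].
  have ho' : L x1 y1 1 < L x1.+1 y1 1 by move: ho; rewrite /ofill; lia.
  have [r [hr hfr hT]] := wit_q HG (leq_trans hx1 hu) (ltnW (leq_trans hy1 hv))
    ho' (leqnn _).
  exists [:: (x1, r)]; split => //; split.
  + rewrite /= Hp Hfp hfr /= /in_rect /=; apply/andP; split => //; lia.
  + rewrite /= andbT /se_step /=; lia.
- move: Hall => /= /andP [/andP [/andP [/= hx1 hy1] ho] Hall2].
  move: Hsort => /= /andP [/andP [/= h12x h12y] Hsort2].
  case: s2 IH Hall2 Hsort2 h12x h12y => x2 y2 IH Hall2 Hsort2 /= h12x h12y.
  move: (Hall2) => /= /andP [/andP [/andP [/= hx2 hy2] ho2] _].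
  have ho2' : L x2 y2 1 < L x2 y2.+1 1 by move: ho2; rewrite /ofill; lia.
  have [c2 [hc2 hfc2 hT2]] := wit_p HG (leq_trans hy2 hv)
    (ltnW (leq_trans hx2 hu)) ho2' (leqnn _).
  case: (ltnP px c2) => hpc.
  + have [t2 [[Ht2a Ht2s] Ht2z]] := IH (x2, y2) Hall2 Hsort2 (c2, y2)
      ltac:(rewrite /in_rect /=; apply/andP; split; lia) hfc2 hc2 (leqnn _) hT2.
    exists ((c2, y2) :: t2); split; last by rewrite /= Ht2z.
    split.
    * by rewrite /= Hp Hfp /=.
    * rewrite /= /se_step /=; apply/andP; split => //; lia.
  + have hm1 : L c2.+1 y2.+1 1 <= L x1 y1 1.
      apply: (G_mono HG); lia.
    have ho' : L x1 y1 1 < L x1.+1 y1 1 by move: ho; rewrite /ofill; lia.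
    have [r1 [hr1 hfr1 hT1]] := wit_q HG (leq_trans hx1 hu)
      (ltnW (leq_trans hy1 hv)) ho' (leqnn _).
    case: (ltnP r1 y2) => hry.
    * have : L x1.+1 r1.+1 1 <= L x2 y2 1 by apply: (G_mono HG); lia.
      lia.
    * have [t2 [[Ht2a Ht2s] Ht2z]] := IH (x2, y2) Hall2 Hsort2 (x1, r1)
        ltac:(rewrite /in_rect /=; apply/andP; split; lia) hfr1 h12x hry
        ltac:(simpl; lia).
      exists ((x1, r1) :: t2); split; last by rewrite /= Ht2z.
      split.
      -- by rewrite /= Hp Hfp /=.
      -- rewrite /= /se_step /=; apply/andP; split => //; lia.
Qed.

Lemma thmT k : 0 < k -> forall U V f L, growth U V f L ->
  forall u v, u <= U -> v <= V -> 0 < L u v k ->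
  exists s, se_chain_in_rect f (u, v) s /\ size s = k.
Proof.
elim: k => [//|k IH] _ U V f L HG u v hu hv hpos.
case: k IH hpos => [|k] IH hpos.
- have [a [b [ha hb hf]]] := base_nz HG hu hv hpos.
  exists [:: (a, b)]; split => //; split => //.
  by rewrite /= hf /in_rect /= ha hb.
- have HG' := shift_growth HG.
  have [s [Hs Hsz]] := IH isT U V _ _ HG' u v hu hv hpos.
  case: s Hs Hsz => [//|[x1 y1] s'] Hs Hsz.
  move: (Hs) => [/= /andP [/andP [/andP [/= hx1 hy1] ho] _] _].
  have ho' : L x1 y1 1 < L x1 y1.+1 1 by move: ho; rewrite /ofill; lia.
  have [c [hc hfc hT]] := wit_p HG (leq_trans hy1 hv)
    (ltnW (leq_trans hx1 hu)) ho' (leqnn _).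
  have [t [Ht Htz]] := claim HG hu hv Hs (erefl _) (p := (c, y1))
    ltac:(rewrite /in_rect /=; apply/andP; split; lia) hfc hc (leqnn _) hT.
  by exists ((c, y1) :: t); split => //=; rewrite Htz Hsz.
Qed.

Lemma part_big l i d : size l <= d -> d < i -> part l i = 0.
Proof. move=> hs hi; rewrite /part nth_default //; lia. Qed.

Lemma nthF F i j : is_partition F -> i <= j -> j < size F ->
  nth 0 F j <= nth 0 F i.
Proof.
move=> /andP [Hs _] hij hj.
have tr : transitive geq by move=> a b c /= h1 h2; lia.
have rf : reflexive geq by move=> a /=.
apply: (sorted_leq_nth tr rf 0 Hs) => //; rewrite inE /=; lia.
Qed.

Theorem lemma5p2 (d : nat) (F : seq nat) (f : nat -> nat -> nat)
    (g : nat -> nat -> seq nat) (x y : nat) :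
  is_partition F ->
  dRSK_growth d F f g ->
  lattice_point F (x, y) ->
  ~ (exists s : seq (nat * nat), se_chain_in_rect f (x, y) s /\ size s = d) ->
  forall a b, a < x -> b < y ->
    RSK_local (f a b) (g a b) (g a b.+1) (g a.+1 b) (g a.+1 b.+1).
Proof.
move=> HF [Gax Gloc] /andP [/= hyF hxF] Hno.
case: d Gloc Hno => [|d] Gloc Hno.
  by exfalso; apply: Hno; exists [::].
pose L := fun x y i => part (g x y) i.
have Fy : forall b, b < y -> x <= nth 0 F b.
  move=> b hb; apply: (leq_trans hxF); apply: nthF => //; lia.
have indiag : forall a b, a < x -> b < y -> in_diagram F (a, b).
  move=> a b ha hb; rewrite /in_diagram /=; apply/andP; split; first lia.
  exact: (leq_trans ha (Fy b hb)).
suff : forall n a b, a + b < n -> a < x -> b < y ->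
    RSK_local (f a b) (g a b) (g a b.+1) (g a.+1 b) (g a.+1 b.+1).
  by move=> H a b ha hb; apply: (H (a + b).+1).
elim=> [//|n IHn] a b hab ha hb.
have HG : growth a b.+1 f L.
  split.
  - move=> a' b' ha' hb'.
    have [[K1 K2] _ E1 E2] := IHn a' b' ltac:(lia) ltac:(lia) ltac:(lia).
    split => //.
    move=> i hi; split; [exact: (K1 i hi).1 | exact: (K2 i hi).1].
  - move=> y' i hy'; rewrite /L Gax ?orbT //; first by rewrite /part nth_nil.
    by rewrite /lattice_point /=; apply/andP; split; lia.
  - move=> x' i hx'; rewrite /L Gax ?orbT //; first by rewrite /part nth_nil.
    rewrite /lattice_point /=; have := Fy 0 ltac:(lia); lia.
have mud : part (g a b.+1) d.+1 = 0.
  case: (posnP (L a b.+1 d.+1)) => [//|hpos].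
  have [s [[Hs1 Hs2] Hsz]] := thmT (ltn0Sn d) HG (leqnn _) (leqnn _) hpos.
  exfalso; apply: Hno; exists s; split => //; split => //.
  apply: sub_all Hs1 => c /andP [/andP [h1 h2] ->]; rewrite andbT /in_rect /=.
  apply/andP; split; simpl in *; lia.
have [/and4P [dk dm dn dr] [[Ikm Ikn] [Imr Inr]] _ E1 E2] := Gloc a b (indiag a b ha hb).
move: dk dm dn dr => /andP [_ sk] /andP [_ sm] /andP [_ sn] /andP [_ sr].
have kd : part (g a b) d.+1 = 0.
  have := (Ikm d.+1 isT).1; lia.
split => //.
- move: E1; rewrite mud kd; lia.
- move=> i hi.
  case: (leqP i d.+1) => hid; first exact: E2.
  rewrite (part_big sr hid) (part_big sm hid) (part_big sn hid).
  case: (ltnP d.+1 i.-1) => hi1.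
  + rewrite (part_big sk hi1) (part_big sm hi1) (part_big sn hi1) //.
  + have -> : i.-1 = d.+1 by lia.
    rewrite kd mud; lia.
Qed.
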